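(* Let $0 < c \le 1$. With probability at least $1 - O(k^{-c}\log k)$, the pruning stage reduces $X$ to a set of at most $k^{1+c}$ elements that contains the uncorrupted maximum.
   Context: Model: $X = \{x_1,\dots,x_n\}$, $n > 2k+1$ elements, exactly $k$ corrupted; a tournament (comparison graph) says for each pair which is larger; restricted to uncorrupted elements it is acyclic, comparisons involving corrupted elements arbitrary. The uncorrupted maximum is the uncorrupted element larger than every other uncorrupted element. Pruning stage: set $t = \varnothing$; repeat $\frac{2n\log k}{k^{1+c}}$ times: pick $x_j$ uniformly at random from $X$ (independently, with replacement), and if $t = \varnothing$ or $x_j$ is larger than $t$ (by a comparison query) set $t \leftarrow x_j$. Then compare every element of $X$ with $t$ and remove from $X$ those smaller than $t$. $\log$ is the natural logarithm. *)

(* Defs.v *)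
From mathcomp Require Import all_boot.
From Stdlib Require Import Reals.

Set Implicit Arguments.
Unset Strict Implicit.
Unset Printing Implicit Defensive.

(* Elements of X are indexed by 'I_n.  [larger x y] means "x is larger than y"
   according to the comparison graph (tournament). *)

Definition is_tournament (n : nat) (larger : rel 'I_n) : Prop :=
  (forall x, ~~ larger x x) /\
  (forall x y, x != y -> larger x y (+) larger y x).

Definition uncorr_rel (n : nat) (larger : rel 'I_n) (K : {set 'I_n}) : rel 'I_n :=
  [rel x y | [&& x \notin K, y \notin K & larger x y]].

Definition acyclic_rel (n : nat) (e : rel 'I_n) : Prop :=
  forall x y, e x y -> ~~ connect e y x.

Definition is_uncorrupted_max (n : nat) (larger : rel 'I_n) (K : {set 'I_n})
    (u : 'I_n) : Prop :=
  u \notin K /\ (forall y, y \notin K -> y != u -> larger u y).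

Definition num_iter (n k : nat) (c : R) : nat :=
  Z.to_nat (Int_part (Rmult (Rmult 2 (INR n)) (ln (INR k)) / Rpower (INR k) (Rplus 1 c))%R).

(* One step of the tournament scan: t = None encodes t = emptyset. *)
Definition scan_step (n : nat) (larger : rel 'I_n) (t : option 'I_n) (x : 'I_n)
    : option 'I_n :=
  match t with
  | None => Some x
  | Some y => if larger x y then Some x else Some y
  end.

Definition scan (n : nat) (larger : rel 'I_n) (s : seq 'I_n) : option 'I_n :=
  foldl (scan_step larger) None s.

Definition pruned (n : nat) (larger : rel 'I_n) (s : seq 'I_n) : {set 'I_n} :=
  match scan larger s with
  | None => [set: 'I_n]
  | Some t => [set x | ~~ larger t x]
  end.

(* Probability of an event on m i.i.d. uniform samples from 'I_n:
   the uniform measure on m.-tuple 'I_n. *)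
Definition prob_samples (n m : nat) (E : pred (m.-tuple 'I_n)) : R :=
  (INR #|[set s : m.-tuple 'I_n | E s]| / INR (n ^ m))%R.

Definition success (n k : nat) (c : R) (larger : rel 'I_n) (u : 'I_n)
    (s : (num_iter n k c).-tuple 'I_n) : bool :=
  let S := pruned larger s in
  (if Rle_dec (INR #|S|) (Rpower (INR k) (Rplus 1 c)) then true else false)
  && (u \in S).

(* Main.v *)
Require Import Defs.
From mathcomp Require Import all_boot.
From Stdlib Require Import Reals.
From Stdlib Require Import Lra Lia. From Stdlib Require Znat.
From mathcomp Require Import zify.
Delimit Scope nat_scope with N.
Set Implicit Arguments. Unset Strict Implicit.

Lemma card_tuples_in n m (D : {set 'I_n}) :
  #|[set s : m.-tuple 'I_n | all (mem D) s]| = expn #|D| m.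
Proof.
have -> : [set s : m.-tuple 'I_n | all (mem D) s] =
  (fun f : {ffun 'I_m -> 'I_n} => mktuple f) @: [set f | f \in ffun_on (mem D)].
  apply/setP => s; rewrite inE; apply/idP/imsetP.
  - move/all_tnthP => H; exists [ffun i => tnth s i].
      by rewrite inE; apply/ffun_onP => i; rewrite ffunE; exact: H.
    by apply: eq_from_tnth => i; rewrite tnth_mktuple ffunE.
  - case=> f; rewrite inE => /ffun_onP Hf ->; apply/all_tnthP => i.
    by rewrite tnth_mktuple; exact: Hf.
rewrite card_imset; last first.
  move=> f g /= Hfg; apply/ffunP => i.
  by rewrite -(tnth_mktuple f) Hfg tnth_mktuple.
rewrite cardsE card_ffun_on card_ord.
by [].
Qed.

Lemma larger_trans n (larger : rel 'I_n) K :
  is_tournament larger -> acyclic_rel (uncorr_rel larger K) ->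
  forall a b c, a \notin K -> b \notin K -> c \notin K ->
  larger a b -> larger b c -> larger a c.
Proof.
move=> [irr tot] acy a b c aK bK cK ab bc.
have ne_ab : a != b by apply/eqP => E; move: ab; rewrite E (negbTE (irr b)).
case: (eqVneq a c) => [E|ne_ac].
  by move: bc (tot a b ne_ab); rewrite -E ab => ->.
move: (tot a c ne_ac); case: (larger a c) => //= ca.
have e_ab : uncorr_rel larger K a b by rewrite /uncorr_rel /= aK bK ab.
move: (acy a b e_ab) => /negP; case.
apply: (connect_trans (y := c)); apply: connect1; rewrite /uncorr_rel /= ?bK ?cK ?aK //.
Qed.


Definition geq_el n (larger : rel 'I_n) (t x : 'I_n) : bool := (t == x) || larger t x.

Lemma geq_trans n (larger : rel 'I_n) K :
  is_tournament larger -> acyclic_rel (uncorr_rel larger K) ->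
  forall a b c, a \notin K -> b \notin K -> c \notin K ->
  geq_el larger a b -> geq_el larger b c -> geq_el larger a c.
Proof.
move=> T A a b c aK bK cK /orP[/eqP->|ab] // /orP[/eqP<-|bc]; rewrite /geq_el ?ab ?orbT //.
by rewrite (larger_trans T A aK bK cK ab bc) orbT.
Qed.

Lemma scan_fold n (larger : rel 'I_n) K :
  is_tournament larger -> acyclic_rel (uncorr_rel larger K) ->
  forall s t0, t0 \notin K -> all (fun x => x \notin K) s ->
  exists t, [/\ foldl (scan_step larger) (Some t0) s = Some t, t \notin K,
     geq_el larger t t0 & all (geq_el larger t) s].
Proof.
move=> T A; elim=> [|x s IH] t0 t0K /=.
  by move=> _; exists t0; rewrite /geq_el eqxx.
case/andP=> xK sK.
set t1 := (if larger x t0 then x else t0).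
have t1K : t1 \notin K by rewrite /t1; case: ifP.
have g10 : geq_el larger t1 t0 by rewrite /t1 /geq_el; case: ifP => h; rewrite ?h ?orbT ?eqxx.
have g1x : geq_el larger t1 x.
  rewrite /t1 /geq_el; case: ifP => h; first by rewrite eqxx.
  case: (eqVneq t0 x) => //= ne.
  by move: (T.2 t0 x ne); rewrite h; case: (larger t0 x).
have -> : (if larger x t0 then Some x else Some t0) = Some t1 by rewrite /t1; case: ifP.
have [t [Ht tK gt1 gs]] := IH t1 t1K sK.
exists t; split => //.
  exact: (geq_trans T A tK t1K t0K gt1 g10).
rewrite /= gs andbT; exact: (geq_trans T A tK t1K xK gt1 g1x).
Qed.

Lemma scan_ok n (larger : rel 'I_n) K :
  is_tournament larger -> acyclic_rel (uncorr_rel larger K) ->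
  forall s, s != [::] -> all (fun x => x \notin K) s ->
  exists t, [/\ scan larger s = Some t, t \notin K & all (geq_el larger t) s].
Proof.
move=> T A [|x s] // _ /= /andP[xK sK].
have [t [Ht tK g gs]] := scan_fold T A xK sK.
by exists t; rewrite /scan /= Ht g gs.
Qed.

Definition rk n (larger : rel 'I_n) (K : {set 'I_n}) (x : 'I_n) : nat :=
  #|[set y | (y \notin K) && ~~ larger x y]|.

Lemma rk_mono n (larger : rel 'I_n) K :
  is_tournament larger -> acyclic_rel (uncorr_rel larger K) ->
  forall a b, a \notin K -> b \notin K -> geq_el larger a b -> rk larger K a <= rk larger K b.
Proof.
move=> T A a b aK bK /orP[/eqP->//|ab].
apply: subset_leq_card; apply/subsetP => y; rewrite !inE => /andP[yK nay].
rewrite yK /=; apply/negP => by_.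
by move: nay; rewrite (larger_trans T A aK bK yK ab by_).
Qed.

Lemma rk_lt n (larger : rel 'I_n) K :
  is_tournament larger -> acyclic_rel (uncorr_rel larger K) ->
  forall a b, a \notin K -> b \notin K -> larger a b -> rk larger K a < rk larger K b.
Proof.
move=> T A a b aK bK ab.
apply: proper_card; apply/properP; split.
  apply/subsetP => y; rewrite !inE => /andP[yK nay].
  rewrite yK /=; apply/negP => by_.
  by move: nay; rewrite (larger_trans T A aK bK yK ab by_).
exists b; first by rewrite inE bK (negbTE (T.1 b)).
by rewrite inE ab andbF.
Qed.

Lemma rk_le n (larger : rel 'I_n) K x : rk larger K x <= #|~: K|.
Proof.
apply: subset_leq_card; apply/subsetP => y; rewrite !inE; by case/andP.
Qed.

Lemma pruned_card n (larger : rel 'I_n) K t :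
  #|[set y | ~~ larger t y]| <= rk larger K t + #|K|.
Proof.
apply: (leq_trans _ (leq_card_setU [set y | (y \notin K) && ~~ larger t y] K)); apply: subset_leq_card; apply/subsetP => y.
rewrite !inE => h; rewrite h andbT; by case: (y \in K).
Qed.

Lemma count_high n (larger : rel 'I_n) K :
  is_tournament larger -> acyclic_rel (uncorr_rel larger K) ->
  forall j, #|[set x | (x \notin K) && (j < rk larger K x)]| <= #|~: K| - j.
Proof.
move=> T A j.
set D := [set x | _].
have -> : #|D| = size (map (rk larger K) (enum D)) by rewrite size_map cardE.
rewrite -(size_iota j.+1 (#|~: K| - j)).
apply: uniq_leq_size.
  rewrite map_inj_in_uniq ?enum_uniq //.
  move=> a b; rewrite !mem_enum !inE => /andP[aK _] /andP[bK _] E.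
  apply/eqP; apply: contraT => ne.
  move: (T.2 a b ne); case ab: (larger a b).
    by move: (rk_lt T A aK bK ab); rewrite E ltnn.
  move=> /= ba; by move: (rk_lt T A bK aK ba); rewrite E ltnn.
move=> v /mapP[x]; rewrite mem_enum inE => /andP[xK jx] ->.
rewrite mem_iota; have := rk_le larger K x; lia.
Qed.

Lemma success_of n k c (larger : rel 'I_n) K u (s : (num_iter n k c).-tuple 'I_n) :
  is_tournament larger -> acyclic_rel (uncorr_rel larger K) ->
  is_uncorrupted_max larger K u -> #|K| = k ->
  all (mem (~: K)) s ->
  (exists2 x, x \in s & (INR (rk larger K x + k) <= Rpower (INR k) (1 + c))%R) ->
  success larger u s.
Proof.
move=> T A [uK umax] cK sK [x xs xP].
have sK' : all (fun x => x \notin K) s.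
  by move: sK; apply: sub_all; rewrite /subpred => y; rewrite !inE.
have sne : (s : seq _) != [::] by apply/eqP => E; have : x \in (s : seq _) := xs; rewrite E.
have [t [st tK gs]] := scan_ok T A sne sK'.
have xK : x \notin K by move/allP: sK' => /(_ x xs).
rewrite /success /pruned st.
apply/andP; split.
  case: Rle_dec => // nle; exfalso; apply: nle.
  apply: Rle_trans xP; apply: le_INR; apply/leP.
  rewrite -cK; apply: leq_trans (pruned_card larger K t) _.
  rewrite leq_add2r; apply: (rk_mono T A tK xK); by move/allP: gs => /(_ x xs).
rewrite inE; case: (eqVneq t u) => [->|ne]; first by rewrite (T.1 u).
have ut := umax t tK ne.
have neu : u != t by rewrite eq_sym.
by move: (T.2 u t neu); rewrite ut; case: (larger t u).
Qed.

Lemma count_success n k c (larger : rel 'I_n) K u j :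
  is_tournament larger -> acyclic_rel (uncorr_rel larger K) ->
  is_uncorrupted_max larger K u -> #|K| = k ->
  (forall x, x \notin K -> ~ (INR (rk larger K x + k) <= Rpower (INR k) (1 + c))%R ->
       j < rk larger K x) ->
  0 < num_iter n k c ->
  expn (n - k) (num_iter n k c) <=
   #|[set s : (num_iter n k c).-tuple 'I_n | success larger u s]| +
   expn (n - k - j) (num_iter n k c).
Proof.
move=> T A U cK hj m0.
set m := num_iter n k c.
have cC : #|~: K| = n - k by rewrite cardsCs setCK card_ord cK.
rewrite -cC -(card_tuples_in m (~: K)).
set B := [set x | (x \notin K) && (j < rk larger K x)].
have HB : #|B| <= #|~: K| - j by exact: count_high.
have HBm : expn #|B| m <= expn (#|~: K| - j) m by rewrite leq_exp2r.
apply: (leq_trans _ (leq_add (leqnn _) HBm)).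
rewrite -card_tuples_in.
apply: (leq_trans _ (leq_card_setU _ _)); apply: subset_leq_card.
apply/subsetP => s; rewrite !inE => sK.
case sB: (all (mem B) s); first by rewrite orbT.
rewrite orbF; apply: (success_of T A U cK sK).
move/negbT: sB => /allPn [x xs xB].
exists x => //.
have xK : x \notin K by have := allP sK x xs; rewrite !inE.
case: (Rle_dec (INR (rk larger K x + k)) (Rpower (INR k) (1 + c))) => // nle.
case/negP: xB; change (x \in B); by rewrite /B inE xK (hj x xK nle).
Qed.
Lemma INR_expn a m : INR (expn a m) = (INR a ^ m)%R.
Proof.
elim: m => [|m IH]; first by rewrite expn0.
by rewrite expnS mult_INR IH /=.
Qed.

Lemma INR_natpow a m : INR (Nat.pow a m) = (INR a ^ m)%R.
Proof. exact: pow_INR. Qed.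

Lemma floor_nat (x : R) : (0 <= x)%R ->
  (INR (Z.to_nat (Int_part x)) <= x /\ x < INR (Z.to_nat (Int_part x)) + 1)%R.
Proof.
move=> x0; have [h1 h2] := base_Int_part x.
have hz : (0 <= Int_part x)%Z.
  have : (-1 < IZR (Int_part x))%R by lra.
  move=> h; have : (-1 < Int_part x)%Z by apply: lt_IZR.
  lia.
rewrite INR_IZR_INZ Znat.Z2Nat.id //; lra.
Qed.

Lemma bernoulli (y : R) m : (0 <= y <= 1)%R -> (1 - INR m * y <= (1 - y) ^ m)%R.
Proof.
move=> hy; elim: m => [|m IH]; first (simpl; lra).
rewrite S_INR [((1 - y) ^ m.+1)%R]/=.
have hp : (0 <= (1 - y) ^ m)%R by apply: pow_le; lra.
have hm := pos_INR m.
case: (Rle_dec 0 (1 - INR m * y)) => h.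
  nra.
nra.
Qed.

Lemma exp_pow_nat (x : R) m : (exp x ^ m = exp (INR m * x))%R.
Proof.
elim: m => [|m IH]; first by rewrite /= Rmult_0_l exp_0.
rewrite [(exp x ^ m.+1)%R]/= IH S_INR -exp_plus; f_equal; ring.
Qed.

Lemma exp_le (x y : R) : (x <= y)%R -> (exp x <= exp y)%R.
Proof.
move=> [h|->]; [left; exact: exp_increasing | right; reflexivity].
Qed.

Open Scope R_scope.

Theorem mainTheorem11 :
  exists C : R, (0 < C)%R /\
  forall (c : R) (n k : nat) (larger : rel 'I_n) (K : {set 'I_n}) (u : 'I_n),
    (0 < c <= 1)%R ->
    (2 * k + 1 < n)%N ->
    (2 <= k)%N ->
    #|K| = k ->
    is_tournament larger ->
    acyclic_rel (uncorr_rel larger K) ->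
    is_uncorrupted_max larger K u ->
    (prob_samples (@success n k c larger u)
       >= 1 - C * Rpower (INR k) (- c) * ln (INR k))%R.
Proof.
exists 8; split; first lra.
move=> c n k larger K u [c0 c1] hn hk cK T A U.
have k2 : 2 <= INR k by apply: (le_INR 2 k); apply/leP.
have kpos : 0 < INR k by lra.
have kn : (k <= n)%N by lia.
have kn' : (k < n)%N by lia.
have knR : INR k < INR n by apply: lt_INR; apply/ltP.
have npos : 0 < INR n by lra.
set a := ln (INR k).
have a2 : / 2 < a.
  have : ln 2 <= a.
    case: k2 => h; [left; apply: ln_increasing; lra | rewrite /a -h; right; reflexivity].
  have := ln_lt_2; lra.
set kc := Rpower (INR k) c.
have kc1 : 1 <= kc.
  rewrite -(Rpower_O (INR k) kpos); apply: Rle_Rpower; lra.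
have kck : kc <= INR k.
  rewrite -{1}(Rpower_1 (INR k) kpos); apply: Rle_Rpower; lra.
have hP : Rpower (INR k) (1 + c) = INR k * kc by rewrite Rpower_plus Rpower_1.
have hneg : Rpower (INR k) (- c) = / kc by rewrite Rpower_Ropp.
rewrite hneg.
have kcpos : 0 < kc by lra.
set Z := / kc * a.
have Zpos : 0 < Z by rewrite /Z; apply: Rmult_lt_0_compat; [apply: Rinv_0_lt_compat|]; lra.
have -> : 8 * / kc * a = 8 * Z by rewrite /Z; ring.
rewrite /prob_samples INR_natpow.
set m := num_iter n k c.
have nm : 0 < INR n ^ m by apply: pow_lt.
set S := #|[set s | _]|.
case: (Rle_dec kc (8 * a)) => hka.
  have : 1 <= 8 * Z.
    have -> : 8 * Z = 8 * a * / kc by rewrite /Z; ring.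
    rewrite -(Rinv_r kc); last lra.
    apply: Rmult_le_compat_r => //; left; apply: Rinv_0_lt_compat; lra.
  have : 0 <= INR S / INR n ^ m.
    apply: Rmult_le_pos; [exact: pos_INR | left; exact: Rinv_0_lt_compat].
  lra.
have hka' : 8 * a < kc by lra.
set X := 2 * INR n * a / (INR k * kc).
have Xpos : 0 <= X.
  rewrite /X; apply: Rmult_le_pos; first (apply: Rmult_le_pos; lra).
  left; apply: Rinv_0_lt_compat; nra.
have [mX Xm] : INR m <= X /\ X < INR m + 1.
  rewrite /m /num_iter hP; exact: floor_nat.
have Pge : INR k <= INR k * kc by nra.
case: (posnP m) => m0.
  (* no sampling: nothing is pruned *)
  have nP : INR n <= INR k * kc.
    have : X < 1 by move: Xm; rewrite m0 /=; lra.
    rewrite /X => hX.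
    have kkc : 0 < INR k * kc by nra.
    have : 2 * INR n * a < INR k * kc.
      have := Rmult_lt_compat_r (INR k * kc) _ _ kkc hX.
      rewrite /Rdiv Rmult_assoc Rinv_l; lra.
    nra.
  have -> : S = expn n m.
    rewrite /S; have -> : [set s : m.-tuple 'I_n | success larger u s] = setT.
      apply/setP => s; rewrite !inE.
      have E : tval s = [::] by apply/nilP; rewrite /nilp size_tuple m0.
      rewrite /success /pruned /scan E /= cardsT card_ord in_setT andbT hP.
      by case: Rle_dec.
    by rewrite cardsT card_tuple card_ord.
  rewrite INR_expn /Rdiv Rinv_r; lra.
have P0 : 0 <= INR k * kc - INR k by lra.
have [jl ju] := floor_nat P0.
set j := Z.to_nat (Int_part (INR k * kc - INR k)) in jl ju.
have hj : forall x, x \notin K ->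
    ~ (INR (rk larger K x + k) <= Rpower (INR k) (1 + c)) -> (j < rk larger K x)%N.
  move=> x _ h; rewrite hP plus_INR in h.
  apply/ltP; apply: INR_lt; lra.
have H := count_success T A U cK hj m0.
have HR : INR (n - k) ^ m <= INR S + INR (n - k - j) ^ m.
  rewrite -!INR_expn -plus_INR; apply: le_INR; apply/leP; exact: H.
have nmk : INR (n - k) = INR n - INR k by rewrite minus_INR //; apply/leP.
set q1 := INR (n - k) / INR n.
set q2 := INR (n - k - j) / INR n.
have Hq : INR S / INR n ^ m >= q1 ^ m - q2 ^ m.
  rewrite /q1 /q2 /Rdiv !Rpow_mult_distr !pow_inv.
  have ip : 0 < / INR n ^ m by apply: Rinv_0_lt_compat.
  apply: Rle_ge; rewrite -Rmult_minus_distr_r; apply: Rmult_le_compat_r; lra.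
have mpos : 1 <= INR m by apply: (le_INR 1); apply/leP.
have B1 : q1 ^ m >= 1 - 2 * Z.
  have hy : 0 <= INR k / INR n <= 1.
    split; first by apply: Rmult_le_pos; [lra | left; apply: Rinv_0_lt_compat].
    apply: (Rmult_le_reg_r (INR n)) => //; rewrite /Rdiv Rmult_assoc Rinv_l; lra.
  have -> : q1 = 1 - INR k / INR n by rewrite /q1 nmk; field; lra.
  have := bernoulli m hy.
  have : INR m * (INR k / INR n) <= 2 * Z.
    have -> : 2 * Z = X * INR k / INR n by rewrite /X /Z; field; lra.
    rewrite /Rdiv -Rmult_assoc; apply: Rmult_le_compat_r.
      left; apply: Rinv_0_lt_compat; lra.
    apply: Rmult_le_compat_r; lra.
  lra.
have B2 : q2 ^ m <= 6 * Z.
  case: (leqP (n - k) j) => hjn.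
    rewrite /q2; have -> : (n - k - j = 0)%N by lia.
    rewrite INR_0 /Rdiv Rmult_0_l pow_i; [lra | exact/ltP].
  have nkj : INR (n - k - j) = INR n - INR k - INR j.
    rewrite !minus_INR //; apply/leP; lia.
  have kjhi : INR k + INR j < INR n.
    rewrite -plus_INR; apply: lt_INR; apply/ltP; lia.
  set y := (INR k + INR j) / INR n.
  have q2y : q2 = 1 - y by rewrite /q2 /y nkj; field; lra.
  have q2p : 0 <= q2 by rewrite /q2; apply: Rmult_le_pos; [exact: pos_INR | left; apply: Rinv_0_lt_compat; lra].
  have e1 : q2 <= exp (- y) by rewrite q2y; have := exp_ineq1_le (- y); lra.
  have e2 : q2 ^ m <= exp (INR m * - y).
    rewrite -exp_pow_nat; apply: pow_incr; lra.
  have P2 : 2 <= INR k * kc by nra.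
  have XP : X * (INR k * kc) = 2 * INR n * a by rewrite /X; field; lra.
  have Xna : X <= INR n * a by nra.
  have s1 : INR m * (INR k + INR j) >= INR m * (INR k * kc - 1).
    apply: Rle_ge; apply: Rmult_le_compat_l; lra.
  have s2 : INR m * (INR k * kc - 1) >= (X - 1) * (INR k * kc - 1).
    apply: Rle_ge; apply: Rmult_le_compat_r; lra.
  have s3 : INR m * (INR k + INR j) >= INR n * (a - 1) by nra.
  have e3 : INR m * - y <= 1 - a.
    have -> : INR m * - y = - (INR m * (INR k + INR j) / INR n) by rewrite /y; field; lra.
    have : INR n * (a - 1) / INR n <= INR m * (INR k + INR j) / INR n.
      apply: Rmult_le_compat_r; [left; apply: Rinv_0_lt_compat|]; lra.
    have -> : INR n * (a - 1) / INR n = a - 1 by field; lra.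
    lra.
  have e4 : exp (1 - a) <= 3 / INR k.
    rewrite /Rminus exp_plus exp_Ropp /a exp_ln //.
    apply: Rmult_le_compat_r; [left; apply: Rinv_0_lt_compat; lra | exact: exp_le_3].
  have e5 : 3 / INR k <= 3 / kc.
    apply: Rmult_le_compat_l; first lra.
    apply: Rinv_le_contravar; lra.
  have e6 : 3 / kc <= 6 * Z.
    rewrite /Z /Rdiv; have : 0 < / kc by apply: Rinv_0_lt_compat.
    nra.
  have := exp_le e3; lra.
lra.
Qed.
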